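(* Let $\Omega\subset\mathbb{R}^d$ be a bounded domain and $k\ge1$. Suppose $f:\mathbb{R}^d\to\mathbb{R}$ can be represented by an MLP with width $W\ge1$, depth $L\ge1$ and activation function $\sigma_k(x)=\max(0,x)^k$. Then there exists a KAN $g$ with width $W$, depth at most $2L$, and grid size $G=2$ with $k$-th order B-spline functions such that $g(\mathbf{x})=f(\mathbf{x})$ for all $\mathbf{x}\in\Omega$.
   Context: An MLP of depth $L$ and width $W$ with activation $\sigma_k$ is a map $f=A_L\circ\sigma_k\circ A_{L-1}\circ\cdots\circ\sigma_k\circ A_1$, where the $A_l$ are affine maps, all intermediate (hidden) dimensions are at most $W$, and $\sigma_k$ is applied coordinatewise. A KAN of depth $D$ is a composition $\Phi_{D-1}\circ\cdots\circ\Phi_0$ of KAN layers, where a KAN layer from $\mathbb{R}^{m}$ to $\mathbb{R}^{m'}$ is a matrix of univariate functions $\{\phi_{j,i}\}$ acting by $(\Phi\mathbf{x})_j=\sum_{i=1}^{m}\phi_{j,i}(x_i)$; its width is the maximal hidden-layer dimension. Each univariate function has the form $\phi(x)=w_b\,\mathrm{silu}(x)+w_s\sum_i c_iB_i(x)$ with $\mathrm{silu}(x)=x/(1+e^{-x})$, real coefficients $w_b,w_s,c_i$, and $B_i$ the degree-$k$ B-splines on the knot sequence obtained from a uniform partition of an interval $[-R,R]$ into $G$ intervals extended uniformly by $k$ knots on each side (''grid size $G$ with $k$-th order B-splines''). *)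

(* Defs.v *)
From HB Require Import structures.
From mathcomp Require Import all_boot all_order all_algebra.
From mathcomp Require Import all_classical all_reals all_analysis.
Set Implicit Arguments. Unset Strict Implicit. Unset Printing Implicit Defensive.
Import Order.TTheory GRing.Theory Num.Theory.
Local Open Scope ring_scope.

Section Nets.
Variable R : realType.

Definition sigmak (k : nat) (x : R) : R := (Num.max 0 x) ^+ k.

Definition affine (m n : nat) (A : 'M[R]_(m, n)) (b : 'rV[R]_n) (x : 'rV[R]_m)
  : 'rV[R]_n := x *m A + b.

Inductive mlp : nat -> nat -> Type :=
| MLast : forall m n, 'M[R]_(m, n) -> 'rV[R]_n -> mlp m n
| MCons : forall m h n, 'M[R]_(m, h) -> 'rV[R]_h -> mlp h n -> mlp m n.

Fixpoint mlp_eval (k : nat) (m n : nat) (N : mlp m n) : 'rV[R]_m -> 'rV[R]_n :=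
  match N in mlp m n return 'rV[R]_m -> 'rV[R]_n with
  | MLast _ _ A b => fun x => affine A b x
  | MCons _ _ _ A b N' => fun x => mlp_eval k N' (map_mx (sigmak k) (affine A b x))
  end.

Fixpoint mlp_depth (m n : nat) (N : mlp m n) : nat :=
  match N with
  | MLast _ _ _ _ => 1
  | MCons _ _ _ _ _ N' => (mlp_depth N').+1
  end.

Fixpoint mlp_width (m n : nat) (N : mlp m n) : nat :=
  match N with
  | MLast _ _ _ _ => 0
  | MCons _ h _ _ _ N' => maxn h (mlp_width N')
  end.

(** knots t_j, j = 0 .. G+2k, of the uniform partition of [-Rg,Rg] into G
    intervals, extended uniformly by k knots on each side:
    t_j = -Rg + (j - k) * (2 Rg / G). *)
Definition knot (Rg : R) (G k : nat) (j : nat) : R :=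
  - Rg + ((j%:R - k%:R) * (2 * Rg / G%:R)).

(** Cox-de Boor recursion: bspl t p i = B_{i,p} on knots t. *)
Fixpoint bspl (t : nat -> R) (p i : nat) (x : R) : R :=
  match p with
  | 0 => if (t i <= x) && (x < t i.+1) then 1 else 0
  | p'.+1 => (x - t i) / (t (i + p) - t i) * bspl t p' i x
             + (t (i + p).+1 - x) / (t (i + p).+1 - t i.+1) * bspl t p' i.+1 x
  end.

Definition bspline (Rg : R) (G k : nat) (i : 'I_(G + k)) (x : R) : R :=
  bspl (knot Rg G k) k i x.

Definition silu (x : R) : R := x / (1 + expR (- x)).

Record uparam (G k : nat) := UParam {
  wb : R; ws : R; coef : 'I_(G + k) -> R }.

Definition phi_eval (Rg : R) (G k : nat) (P : uparam G k) (x : R) : R :=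
  wb P * silu x + ws P * \sum_(i < G + k) coef P i * @bspline Rg G k i x.

Definition kan_layer (G k m m' : nat) := 'I_m' -> 'I_m -> uparam G k.

Definition layer_eval (Rg : R) (G k m m' : nat) (Phi : kan_layer G k m m')
  (x : 'rV[R]_m) : 'rV[R]_m' :=
  \row_(j < m') \sum_(i < m) phi_eval Rg (Phi j i) (x 0 i).

Inductive kan (G k : nat) : nat -> nat -> Type :=
| KLast : forall m n, kan_layer G k m n -> kan G k m n
| KCons : forall m h n, kan_layer G k m h -> kan G k h n -> kan G k m n.

Fixpoint kan_eval (Rg : R) (G k : nat) (m n : nat) (N : kan G k m n)
  : 'rV[R]_m -> 'rV[R]_n :=
  match N in kan _ _ m n return 'rV[R]_m -> 'rV[R]_n with
  | KLast _ _ Phi => fun x => layer_eval Rg Phi x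
  | KCons _ _ _ Phi N' => fun x => kan_eval Rg N' (layer_eval Rg Phi x)
  end.

Fixpoint kan_depth (G k m n : nat) (N : kan G k m n) : nat :=
  match N with
  | KLast _ _ _ => 1
  | KCons _ _ _ _ N' => (kan_depth N').+1
  end.

Fixpoint kan_width (G k m n : nat) (N : kan G k m n) : nat :=
  match N with
  | KLast _ _ _ => 0
  | KCons _ h _ _ N' => maxn h (kan_width N')
  end.

End Nets.

(* Main.v *)
Require Import Defs.
From HB Require Import structures.
From mathcomp Require Import all_boot all_order all_algebra.
From mathcomp Require Import all_classical all_reals all_analysis.
From mathcomp Require Import ring lra zify.
Import Order.TTheory GRing.Theory Num.Theory.
Import numFieldNormedType.Exports.
Local Open Scope classical_set_scope.
Local Open Scope ring_scope.
Section BS.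
Variable R : realType.
Variables (t : nat -> R) (t0 h : R).
Hypothesis ht : forall j, t j = t0 + j%:R * h.
Hypothesis hpos : 0 < h.

Lemma t_le i j : (i <= j)%N -> t i <= t j.
Proof. by move=> ij; rewrite !ht lerD2l; apply: ler_wpM2r; [exact: ltW | rewrite ler_nat]. Qed.
Lemma t_lt i j : (i < j)%N -> t i < t j.
Proof. by move=> ij; rewrite !ht ltrD2l ltr_pM2r // ltr_nat. Qed.
Lemma t_lt_inv i j : t i < t j -> (i < j)%N.
Proof. by move=> h1; rewrite ltnNge; apply/negP => /t_le; rewrite leNgt h1. Qed.

Lemma Z1 p : forall i x, x < t i -> bspl t p i x = 0.
Proof.
elim: p => [|q IH] i x hx /=; first by rewrite leNgt hx.
rewrite IH // IH ?mulr0 ?addr0 //; apply: (lt_le_trans hx); apply: t_le; lia.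
Qed.

Lemma Z2 p : forall i x, t (i + p).+1 <= x -> bspl t p i x = 0.
Proof.
elim: p => [|q IH] i x hx /=.
  by rewrite addn0 in hx; rewrite ltNge hx andbF.
rewrite IH; last by apply: le_trans hx; apply: t_le; rewrite addnS; lia.
rewrite IH; last by rewrite addSn -addnS.
by rewrite !mulr0 addr0.
Qed.

Lemma SIG p : forall i x, x < t i.+1 ->
  bspl t p i x = if t i <= x then (x - t i) ^+ p / (p`!%:R * h ^+ p) else 0.
Proof.
elim: p => [|q IH] i x hx /=.
  by rewrite hx andbT; case: ifP => //; rewrite expr0 fact0 mulr1 divr1.
rewrite (Z1 _ _ _ hx) mulr0 addr0 IH //.
case: ifP => _; last by rewrite mulr0.
rewrite !ht factS natrM exprS.
have hn : (q.+1)%:R != 0 :> R by rewrite pnatr_eq0.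
have hf : (q`!)%:R != 0 :> R by rewrite pnatr_eq0 -lt0n fact_gt0.
have hh : h != 0 by rewrite gt_eqF.
rewrite natrD exprS.
have hH : h ^+ q != 0 by rewrite expf_neq0.
move: hn hf hH; set a := (q.+1)%:R; set F := (q`!)%:R; set H := h ^+ q.
set y := x - _; move=> hn hf hH.
have -> : t0 + (i%:R + a) * h - (t0 + i%:R * h) = a * h by ring.
have h1 : (1 + q%:R : R) != 0 by rewrite -(natrD R 1 q) pnatr_eq0.
by field; rewrite hH hh h1 andbT; exact: hf.
Qed.

Lemma hq1 q : (1 + q%:R : R) != 0.
Proof. by rewrite -(natrD R 1 q) pnatr_eq0. Qed.
Lemma hh0 : h != 0. Proof. by rewrite gt_eqF. Qed.

Lemma unfold1 q i x : bspl t q.+1 i x =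
  (x - t i) / (q.+1%:R * h) * bspl t q i x
  + (1 - (x - t i.+1) / (q.+1%:R * h)) * bspl t q i.+1 x.
Proof.
rewrite [LHS]/=.
have hD : q.+1%:R * h != 0 by rewrite mulf_neq0 ?pnatr_eq0 ?gt_eqF.
have -> : t (i + q.+1) - t i = q.+1%:R * h by rewrite !ht natrD; ring.
have -> : t (i + q.+1).+1 - t i.+1 = q.+1%:R * h.
  by rewrite !ht -addn1 -(addn1 i) !natrD; ring.
congr (_ + _ * _).
have -> : t (i + q.+1).+1 = t i.+1 + q.+1%:R * h.
  by rewrite !ht -addn1 -(addn1 i) !natrD; ring.
by field; rewrite hh0 hq1.
Qed.

Lemma STEP q m n x (c : nat -> R) : t (m + q).+1 <= x -> x < t n ->
  \sum_(m <= i < n) c i * bspl t q.+1 i x =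
  \sum_(m.+1 <= i < n) (c i * ((x - t i) / (q.+1%:R * h))
       + c i.-1 * (1 - (x - t i) / (q.+1%:R * h))) * bspl t q i x.
Proof.
move=> h1 h2.
have mn : ((m + q).+1 < n)%N by apply: t_lt_inv; exact: le_lt_trans h1 h2.
case: n mn h2 => [//|n] mn h2.
have mn' : (m <= n)%N by lia.
under eq_bigr do rewrite unfold1 mulrDr.
rewrite big_split /= big_nat_recl // (@Z2 q m) // !mulr0 add0r.
rewrite (big_nat_recr _ _ _ mn') /= (@Z1 q n.+1) // !mulr0 addr0.
rewrite big_add1 /=.
under [RHS]eq_bigr do rewrite mulrDl.
rewrite big_split /=.
congr (_ + _); apply: eq_bigr => i _; ring.
Qed.

Lemma PU0 m x : t m <= x -> forall n, x < t n -> \sum_(m <= i < n) bspl t 0 i x = 1.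
Proof.
move=> h1; elim => [|n IH] h2.
  by have := lt_le_trans (le_lt_trans h1 h2) (t_le _ _ (leq0n m)); rewrite ltxx.
have mn : (m <= n)%N.
  by have := t_lt_inv _ _ (le_lt_trans h1 h2); lia.
rewrite (big_nat_recr _ _ _ mn) /=.
case: (ltP x (t n)) => hx.
  by rewrite IH // /= addr0.
rewrite h2 /= addrC big_nat_cond big1 ?addr0 // => i /andP[/andP[_ hi] _].
have -> : (x < t i.+1) = false.
  by apply/negbTE; rewrite -leNgt; apply: le_trans hx; apply: t_le.
by rewrite andbF.
Qed.

Lemma PU p : forall m n x, t (m + p) <= x -> x < t n ->
  \sum_(m <= i < n) bspl t p i x = 1.
Proof.
elim: p => [|q IH] m n x h1 h2.
  by apply: PU0 => //; rewrite addn0 in h1.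
have h1' : t (m + q).+1 <= x by rewrite -addnS.
have h1'' : t (m.+1 + q) <= x by rewrite addSn.
under eq_bigr do rewrite -[bspl _ _ _ _]mul1r.
rewrite (@STEP q m n x (fun _ => 1)) //.
under eq_bigr do rewrite !mul1r subrKC mul1r.
exact: IH.
Qed.

Lemma LIN p : forall m n x, t (m + p) <= x -> x < t n ->
  p%:R * \sum_(m <= i < n) (t i + p.+1%:R * h / 2) * bspl t p i x = p%:R * x.
Proof.
elim: p => [|q IH] m n x h1 h2; first by rewrite !mul0r.
have h1' : t (m + q).+1 <= x by rewrite -addnS.
have h1'' : t (m.+1 + q) <= x by rewrite addSn.
rewrite (@STEP q m n x (fun i => t i + q.+2%:R * h / 2)) //.
rewrite big_nat_cond mulr_sumr.
have hD : q.+1%:R * h != 0 by rewrite mulf_neq0 ?pnatr_eq0 ?gt_eqF.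
transitivity (\sum_(m.+1 <= i < n) (q%:R * ((t i + q.+1%:R * h / 2) * bspl t q i x) + x * bspl t q i x)).
  rewrite [RHS]big_nat_cond; apply: eq_bigr => i /andP[/andP[hi _] _].
  have ti : t i.-1 = t i - h.
    by rewrite !ht; case: i hi => // i _ /=; rewrite -addn1 natrD; ring.
  rewrite ti !mulrA -mulrDl; congr (_ * _).
  have e1 : q.+1%:R = q%:R + 1 :> R by rewrite -natr1.
  have e2 : q.+2%:R = q%:R + 2 :> R by rewrite -natr1 e1; ring.
  rewrite e2 e1 in hD *.
  have hq : q%:R + 1 != 0 :> R by rewrite -e1 pnatr_eq0.
  by field; rewrite hh0 hq.
rewrite big_split /= -!mulr_sumr IH // PU //.
by rewrite mulr1 -natr1 mulrDl mul1r.
Qed.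
End BS.

Section Spec.
Variable R : realType.

Lemma knotE (Rg : R) k j : knot Rg 2 k j = (- Rg - k%:R * Rg) + j%:R * Rg.
Proof. rewrite /knot; have h2 : (2%:R : R) != 0 by rewrite pnatr_eq0. by field.
Qed.

Definition plin (Rg : R) k (a c : R) : uparam R 2 k :=
  UParam 0 1 (fun i : 'I_(2 + k) => a * (knot Rg 2 k i + k.+1%:R * Rg / 2) + c).
Definition psig (Rg : R) k : uparam R 2 k :=
  UParam 0 1 (fun i : 'I_(2 + k) => if (i : nat) == k.+1 then k`!%:R * Rg ^+ k else 0).
Definition pzero k : uparam R 2 k := UParam 0 0 (fun _ => 0).

Lemma pzeroE Rg k x : phi_eval Rg (pzero k) x = 0.
Proof. by rewrite /phi_eval /= !mul0r addr0. Qed.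

Lemma plinE (Rg : R) k a c x : 0 < Rg -> (1 <= k)%N -> - Rg <= x -> x < Rg ->
  phi_eval Rg (plin Rg k a c) x = a * x + c.
Proof.
move=> hR hk h1 h2.
rewrite /phi_eval /= mul0r add0r mul1r.
have ht := knotE Rg k.
have hPU := @PU R (knot Rg 2 k) _ _ ht hR k 0 (2 + k)%N x.
have hLIN := @LIN R (knot Rg 2 k) _ _ ht hR k 0 (2 + k)%N x.
have e1 : knot Rg 2 k (0 + k)%N = - Rg by rewrite ht add0n; ring.
have e2 : knot Rg 2 k (2 + k)%N = Rg by rewrite ht natrD; ring.
rewrite e1 e2 in hPU hLIN.
have {}hPU := hPU h1 h2. have {}hLIN := hLIN h1 h2.
rewrite /bspline.
under eq_bigr do rewrite mulrDl -mulrA.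
rewrite big_split /= -!mulr_sumr.
rewrite (big_mkord xpredT (fun i => bspl (knot Rg 2 k) k i x)) in hPU.
rewrite (big_mkord xpredT (fun i => (knot Rg 2 k i + k.+1%:R * Rg / 2) * bspl (knot Rg 2 k) k i x)) in hLIN.
rewrite hPU mulr1; congr (_ * _ + _).
apply: (mulfI (x := k%:R)); first by rewrite pnatr_eq0 -lt0n.
exact: hLIN.
Qed.

Lemma psigE (Rg : R) k x : 0 < Rg -> (1 <= k)%N -> x < Rg ->
  phi_eval Rg (psig Rg k) x = sigmak k x.
Proof.
move=> hR hk h2.
rewrite /phi_eval /= mul0r add0r mul1r.
have ht := knotE Rg k.
have hlt : (k.+1 < 2 + k)%N by lia.
rewrite (bigD1 (Ordinal hlt)) //= eqxx big1 ?addr0; last first.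
  by move=> i /negbTE hi; rewrite -val_eqE /= in hi; rewrite hi mul0r.
rewrite /bspline /= (@SIG R (knot Rg 2 k) _ _ ht hR); last first.
  by rewrite ht (_ : _ + _ = Rg) // -!natr1; ring.
have e0 : knot Rg 2 k k.+1 = 0 by rewrite ht -natr1; ring.
rewrite e0 subr0 /sigmak.
have hf : (k`!)%:R != 0 :> R by rewrite pnatr_eq0 -lt0n fact_gt0.
have hRk : Rg ^+ k != 0 by rewrite expf_neq0 // gt_eqF.

case: (leP 0 x) => hx.
  by field; rewrite hRk hf.
by rewrite mulr0 expr0n; move: hk; rewrite lt0n => /negbTE ->.
Qed.
End Spec.
Set Implicit Arguments. Unset Strict Implicit.
Section Net.
Variable R : realType.
Variable k : nat.
Hypothesis hk : (1 <= k)%N.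

Section Layers.
Variable Rg : R.
Hypothesis hR : 0 < Rg.

Definition Laff m h (A : 'M[R]_(m, h)) (b : 'rV[R]_h) : kan_layer R 2 k m h :=
  fun j i => plin R Rg k (A i j) (if (i : nat) == 0%N then b 0 j else 0).

Lemma LaffE m h (A : 'M[R]_(m, h)) b (x : 'rV[R]_m) : (0 < m)%N ->
  (forall i, - Rg <= x 0 i /\ x 0 i < Rg) ->
  layer_eval Rg (Laff A b) x = affine A b x.
Proof.
move=> hm hx; apply/rowP => j; rewrite !mxE.
transitivity (\sum_i (A i j * x 0 i + (if (i : nat) == 0%N then b 0 j else 0))).
  by apply: eq_bigr => i _; case: (hx i) => h1 h2; rewrite /Laff (@plinE R).
rewrite big_split /=; congr (_ + _).
  by apply: eq_bigr => i _; rewrite mulrC.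
case: m hm A x hx => // m _ A x hx.
by rewrite big_ord_recl /= big1 ?addr0 // => i _.
Qed.

Definition Lsig h : kan_layer R 2 k h h :=
  fun j i => if i == j then psig R Rg k else pzero R k.

Lemma LsigE h (x : 'rV[R]_h) : (forall i, x 0 i < Rg) ->
  layer_eval Rg (@Lsig h) x = map_mx (sigmak k) x.
Proof.
move=> hx; apply/rowP => j; rewrite !mxE.
rewrite (bigD1 j) //= /Lsig eqxx (@psigE R) // big1 ?addr0 // => i /negbTE ->.
exact: (@pzeroE R).
Qed.

Definition Lzero m n : kan_layer R 2 k m n := fun _ _ => pzero R k.
Definition Lconst n (c : 'rV[R]_n) : kan_layer R 2 k 1 n :=
  fun j i => plin R Rg k 0 (c 0 j).

Lemma const_kan m n (c : 'rV[R]_n) : exists K : kan R 2 k m n,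
  [/\ kan_depth K = 2%N, kan_width K = 1%N & forall x, kan_eval Rg K x = c].
Proof.
exists (KCons (@Lzero m 1) (KLast (Lconst c))); split => // x /=.
have -> : layer_eval Rg (@Lzero m 1) x = 0.
  by apply/rowP => j; rewrite !mxE big1 // => i _; exact: (@pzeroE R).
apply/rowP => j; rewrite !mxE big_ord1 mxE (@plinE R) //; first by rewrite mul0r add0r.
- by rewrite oppr_le0 ltW.
Qed.
End Layers.

Lemma sig_bound (y C : R) : `|y| <= C -> `|sigmak k y| <= C ^+ k.
Proof.
move=> hy; have hC : 0 <= C := le_trans (normr_ge0 _) hy.
rewrite /sigmak; case: (leP 0 y) => h0.
  by rewrite normrX; apply: lerXn2r; rewrite ?nnegrE ?normr_ge0.
by rewrite expr0n; move: hk; rewrite lt0n => /negbTE ->; rewrite normr0 exprn_ge0.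
Qed.

Lemma aff_bound m h (A : 'M[R]_(m, h)) (b : 'rV[R]_h) (B : R) (x : 'rV[R]_m) :
  (forall i, `|x 0 i| <= B) -> forall j,
  `|affine A b x 0 j| <= \sum_j0 (\sum_i `|A i j0| * `|B| + `|b 0 j0|).
Proof.
move=> hx j.
have step : `|affine A b x 0 j| <= \sum_i `|A i j| * `|B| + `|b 0 j|.
  rewrite /affine !mxE; apply: le_trans (ler_normD _ _) _; rewrite lerD2r.
  apply: le_trans (ler_norm_sum _ _ _) _; apply: ler_sum => i _.
  rewrite normrM mulrC; apply: ler_wpM2l => //.
  exact: le_trans (hx i) (ler_norm _).
apply: le_trans step _.
rewrite (bigD1 j) //= lerDl; apply: sumr_ge0 => i _.
by apply: addr_ge0 => //; apply: sumr_ge0 => i0 _; rewrite mulr_ge0.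
Qed.

Lemma mlp_depth_gt0 m n (N : mlp R m n) : (0 < mlp_depth N)%N.
Proof. by case: N. Qed.

Lemma mlp2kan m n (N : mlp R m n) : (0 < m)%N -> forall B : R,
  exists R0 : R, 0 <= R0 /\ forall Rg, R0 < Rg -> exists K : kan R 2 k m n,
  [/\ ((kan_depth K).+1 <= 2 * mlp_depth N)%N, (kan_width K <= maxn (mlp_width N) 1)%N &
      forall x : 'rV[R]_m, (forall i, `|x 0 i| <= B) -> kan_eval Rg K x = mlp_eval k N x].
Proof.
elim: N => [m0 n0 A b | m0 h n0 A b N' IH] hm B.
  exists `|B|; split => // Rg hRg.
  have hR : 0 < Rg := le_lt_trans (normr_ge0 _) hRg.
  exists (KLast (Laff Rg A b)); split => // x hx /=.
  apply: LaffE => // i.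
  have : `|x 0 i| < Rg by apply: le_lt_trans (hx i) (le_lt_trans (ler_norm _) hRg).
  by rewrite ltr_norml => /andP[h1 h2]; split => //; exact: ltW.
case: h A b N' IH => [|h] A b N' IH.
  exists 0; split => // Rg hRg.
  have [K [hd hw hK]] := @const_kan Rg hRg m0 n0 (mlp_eval k N' 0).
  exists K; split.
  - by rewrite hd /=; have := mlp_depth_gt0 N'; lia.
  - by rewrite hw /=; lia.
  - by move=> x _ /=; rewrite hK (thinmx0 (map_mx _ _)).
set B' := \sum_j0 (\sum_i `|A i j0| * `|B| + `|b 0 j0|).
have [R1 [hR1 HR1]] := IH (ltn0Sn h) (B' ^+ k).
exists (Num.max (Num.max `|B| B') R1); split.
  by rewrite le_max hR1 orbT.
move=> Rg; rewrite !gt_max => /andP[/andP[hB hB'] h1].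
have hR : 0 < Rg := le_lt_trans (normr_ge0 _) hB.
have [K' [hd hw hK]] := HR1 Rg h1.
exists (KCons (Laff Rg A b) (KCons (@Lsig Rg h.+1) K')); split => /=.
- by lia.
- by lia.
move=> x hx.
rewrite LaffE //; last first.
  move=> i; have : `|x 0 i| < Rg by apply: le_lt_trans (hx i) (le_lt_trans (ler_norm _) hB).
  by rewrite ltr_norml => /andP[h2 h3]; split => //; exact: ltW.
rewrite LsigE //; last first.
  move=> j; apply: le_lt_trans (ler_norm _) _; apply: le_lt_trans hB'.
  exact: aff_bound.
apply: hK => j; rewrite mxE; apply: sig_bound; exact: aff_bound.
Qed.

End Net.

Lemma bound_lem (R : realType) d (Omega : set 'rV[R]_d) : bounded_set Omega ->
  exists B : R, forall x, Omega x -> forall i, `|x 0 i| <= B.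
Proof.
move=> hb. have [M [_ HM]] := hb.
exists (M + 1) => x ox i.
have hM1 : M < M + 1 by rewrite ltrDl.
have /= := HM (M+1) hM1 x ox.
apply: le_trans.
rewrite [X in _ <= X]mx_normrE.
exact: (le_bigmax _ (fun ij => `|x ij.1 ij.2|) (0, i)).
Qed.

Theorem mainTheorem4 (R : realType) (d : nat) (Omega : set 'rV[R]_d)
  (k W L : nat) (f : 'rV[R]_d -> R) :
  open Omega -> connected Omega -> Omega !=set0 -> bounded_set Omega ->
  (1 <= k)%N -> (1 <= W)%N -> (1 <= L)%N ->
  (exists N : mlp R d 1,
      [/\ mlp_depth N = L, (mlp_width N <= W)%N &
          forall x, f x = mlp_eval k N x 0 0]) ->
  exists (Rg : R) (N : kan R 2 k d 1),
    [/\ 0 < Rg, (kan_depth N <= 2 * L)%N, (kan_width N <= W)%N &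
        forall x, Omega x -> kan_eval Rg N x 0 0 = f x].
Proof.
move=> _ _ _ hb hk hW hL [N [hd hw hf]].
have [B hB] := bound_lem hb.
case: d Omega f N hB hf hb hd hw => [|d] Omega f N hB hf hb hd hw.
  have [K [kd kw hK]] := @const_kan R k hk 1 ltr01 0 1 (mlp_eval k N 0).
  exists 1, K; split => //.
  - by rewrite kd; lia.
  - by rewrite kw.
  - by move=> x _; rewrite hK hf (thinmx0 x).
have [R0 [h0 H]] := @mlp2kan R k hk _ _ N (ltn0Sn d) B.
have hR : R0 < R0 + 1 by rewrite ltrDl.
have [K [kd kw hK]] := H (R0 + 1) hR.
exists (R0 + 1), K; split.
- exact: le_lt_trans h0 hR.
- by rewrite -hd; lia.
- by lia.
- by move=> x ox; rewrite hK ?hf //; exact: hB.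
Qed.
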